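(* Let $F$ be a field and let $G,H$ be unital associative $F$-algebras such that $[g_1,g_2,g_3]=0$ for all $g_i\in G$ and $[h_1,h_2,h_3]=0$ for all $h_j\in H$. Let $m',n'\ge 1$ be integers and let $g_i,g'_i\in G$, $h_j,h'_j\in H$. In $G\otimes_F H$ put $v_1=g_1\otimes 1$, $v_i=g_i\otimes h_i$ for $i=2,\dots,2m'-1$, $v_{2m'}=g_{2m'}\otimes 1$, and $w_1=g'_1\otimes 1$, $w_j=g'_j\otimes h'_j$ for $j=2,\dots,2n'+1$. Then \[ [v_1,\dots,v_{2m'}]=[g_1,g_2][g_3,g_4]\cdots[g_{2m'-1},g_{2m'}]\otimes [h_2,h_3][h_4,h_5]\cdots[h_{2m'-2},h_{2m'-1}], \] \[ [w_1,\dots,w_{2n'+1}]=[g'_1,g'_2]\cdots[g'_{2n'-1},g'_{2n'}]\,g'_{2n'+1}\otimes [h'_2,h'_3][h'_4,h'_5]\cdots[h'_{2n'},h'_{2n'+1}], \] where an empty product of commutators equals $1$.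
   Context: Left-normed commutators: $[a_1,a_2]=a_1a_2-a_2a_1$, $[a_1,\dots,a_{n-1},a_n]=[[a_1,\dots,a_{n-1}],a_n]$ for $n\ge 3$. $G\otimes_F H$ is the tensor product algebra with $(g\otimes h)(g'\otimes h')=gg'\otimes hh'$. *)

(* Defs.v *)
From HB Require Import structures.
From mathcomp Require Import all_boot all_order all_algebra.
Set Implicit Arguments. Unset Strict Implicit. Unset Printing Implicit Defensive.
Import GRing.Theory.
Local Open Scope ring_scope.

Definition comm (R : pzRingType) (a b : R) : R := a * b - b * a.

Definition lcomm (R : pzRingType) (a : R) (s : seq R) : R := foldl (@comm R) a s.

(* (T, t) is a tensor product algebra G (x)_F H:
   t is F-bilinear, (g (x) h)(g' (x) h') = gg' (x) hh', 1 (x) 1 = 1, and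
   (T, t) satisfies the universal property of the tensor product of
   F-vector spaces (every bilinear map factors uniquely through a linear map). *)
Definition bilinear_map (F : fieldType) (G H : lmodType F) (V : lmodType F)
  (b : G -> H -> V) : Prop :=
  (forall (a : F) (g g' : G) (h : H), b (a *: g + g') h = a *: b g h + b g' h) /\
  (forall (a : F) (g : G) (h h' : H), b g (a *: h + h') = a *: b g h + b g h').

Definition linear_map (F : fieldType) (U V : lmodType F) (f : U -> V) : Prop :=
  forall (a : F) (x y : U), f (a *: x + y) = a *: f x + f y.

Definition is_tensor_algebra (F : fieldType) (G H T : algType F)
  (t : G -> H -> T) : Prop :=
  [/\ bilinear_map t,
      (forall g g' h h', t g h * t g' h' = t (g * g') (h * h')),
      t 1 1 = 1 &
      (forall (V : lmodType F) (b : G -> H -> V), bilinear_map b ->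
         (exists f : T -> V, linear_map f /\ forall g h, f (t g h) = b g h) /\
         (forall f1 f2 : T -> V, linear_map f1 -> linear_map f2 ->
            (forall g h, f1 (t g h) = f2 (t g h)) -> forall x, f1 x = f2 x))].

(* Main.v *)
Require Import Defs.
From HB Require Import structures.
From mathcomp Require Import all_boot all_order all_algebra.
Import GRing.Theory.
Local Open Scope ring_scope.
From mathcomp Require Import zify.

Lemma central_prod (R : pzRingType) (I : Type) (r : seq I) (P : pred I) (F : I -> R) :
  (forall i, P i -> forall z, F i * z = z * F i) ->
  forall z, (\prod_(i <- r | P i) F i) * z = z * \prod_(i <- r | P i) F i.
Proof.
move=> hF z; apply: (big_ind (fun c => c * z = z * c)).
- by rewrite mul1r mulr1.
- by move=> x y hx hy; rewrite -mulrA hy mulrA hx mulrA.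
- by move=> i Pi; apply: hF.
Qed.

Lemma main_gen (F : fieldType) (G H T : algType F) (t : G -> H -> T)
 (tBl : forall a b c, t (a - b) c = t a c - t b c)
 (tBr : forall a b c, t a (b - c) = t a b - t a c)
 (hmul : forall g g' h h', t g h * t g' h' = t (g * g') (h * h'))
 (cG : forall x y z : G, comm x y * z = z * comm x y)
 (cH : forall x y z : H, comm x y * z = z * comm x y)
 (g : nat -> G) (h : nat -> H) (k : nat) :
 lcomm (t (g 1%N) 1) [seq t (g i) (h i) | i <- iota 2 (2*k+1)] =
   t (\prod_(0 <= j < k.+1) comm (g (2*j+1)%N) (g (2*j+2)%N))
     ((\prod_(1 <= j < k.+1) comm (h (2*j)%N) (h (2*j+1)%N)) * h (2*k+2)%N)
 /\ lcomm (t (g 1%N) 1) [seq t (g i) (h i) | i <- iota 2 (2*k+2)] =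
   t ((\prod_(0 <= j < k.+1) comm (g (2*j+1)%N) (g (2*j+2)%N)) * g (2*k+3)%N)
     (\prod_(1 <= j < k.+2) comm (h (2*j)%N) (h (2*j+1)%N)).
Proof.
have cCG : forall k z, (\prod_(0 <= j < k) comm (g (2*j+1)%N) (g (2*j+2)%N)) * z
    = z * \prod_(0 <= j < k) comm (g (2*j+1)%N) (g (2*j+2)%N).
  by move=> k0 z; apply: central_prod => i _ z'; apply: cG.
have cDH : forall k z, (\prod_(1 <= j < k) comm (h (2*j)%N) (h (2*j+1)%N)) * z
    = z * \prod_(1 <= j < k) comm (h (2*j)%N) (h (2*j+1)%N).
  by move=> k0 z; apply: central_prod => i _ z'; apply: cH.
have PQ : forall k, lcomm (t (g 1%N) 1) [seq t (g i) (h i) | i <- iota 2 (2*k+1)] =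
   t (\prod_(0 <= j < k.+1) comm (g (2*j+1)%N) (g (2*j+2)%N))
     ((\prod_(1 <= j < k.+1) comm (h (2*j)%N) (h (2*j+1)%N)) * h (2*k+2)%N) ->
   lcomm (t (g 1%N) 1) [seq t (g i) (h i) | i <- iota 2 (2*k+2)] =
   t ((\prod_(0 <= j < k.+1) comm (g (2*j+1)%N) (g (2*j+2)%N)) * g (2*k+3)%N)
     (\prod_(1 <= j < k.+2) comm (h (2*j)%N) (h (2*j+1)%N)).
  move=> k0 IH.
  have -> : (2 * k0 + 2 = (2 * k0 + 1) + 1)%N by lia.
  move: IH; rewrite /lcomm => IH; rewrite iotaD map_cat foldl_cat IH /=.
  have -> : (2 + (2 * k0 + 1) = 2 * k0 + 3)%N by lia.
  rewrite /comm !hmul -cCG.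
  set C := \prod_(0 <= j < k0.+1) _.
  set D := \prod_(1 <= j < k0.+1) _.
  have -> : h (2 * k0 + 3)%N * (D * h (2 * k0 + 2)%N) = D * (h (2 * k0 + 3)%N * h (2 * k0 + 2)%N).
    by rewrite mulrA -cDH mulrA.
  rewrite -tBr -!mulrA -mulrBr big_nat_recr //=.
  have E : (2 * k0.+1 = 2 * k0 + 2)%N by lia.
  by rewrite E -addnA.
elim: k => [|k [_ IHQ]].
  have P0 : lcomm (t (g 1%N) 1) [seq t (g i) (h i) | i <- iota 2 (2*0+1)] =
   t (\prod_(0 <= j < 1) comm (g (2*j+1)%N) (g (2*j+2)%N))
     ((\prod_(1 <= j < 1) comm (h (2*j)%N) (h (2*j+1)%N)) * h (2*0+2)%N).
    by rewrite /= big_nat1 big_geq // mul1r /comm !hmul mul1r mulr1 tBl.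
  by split => //; apply: PQ.
have P : lcomm (t (g 1%N) 1) [seq t (g i) (h i) | i <- iota 2 (2*k.+1+1)] =
   t (\prod_(0 <= j < k.+2) comm (g (2*j+1)%N) (g (2*j+2)%N))
     ((\prod_(1 <= j < k.+2) comm (h (2*j)%N) (h (2*j+1)%N)) * h (2*k.+1+2)%N).
  have -> : (2 * k.+1 + 1 = (2 * k + 2) + 1)%N by lia.
  move: IHQ; rewrite /lcomm => IHQ; rewrite iotaD map_cat foldl_cat IHQ /=.
  have -> : (2 + (2 * k + 2) = 2 * k.+1 + 2)%N by lia.
  rewrite /comm !hmul.
  set C := \prod_(0 <= j < k.+1) _.
  set D := \prod_(1 <= j < k.+2) _.
  have -> : h (2 * k.+1 + 2)%N * D = D * h (2 * k.+1 + 2)%N by rewrite cDH.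
  have -> : g (2 * k.+1 + 2)%N * (C * g (2 * k + 3)%N) = C * (g (2 * k.+1 + 2)%N * g (2 * k + 3)%N).
    by rewrite mulrA -cCG mulrA.
  rewrite -tBl -!mulrA -mulrBr big_nat_recr //=.
  have E : (2 * k + 3 = 2 * k.+1 + 1)%N by lia.
  by rewrite E.
by split => //; apply: PQ.
Qed.

Theorem corollary2p3 (F : fieldType) (G H T : algType F) (t : G -> H -> T)
  (hT : is_tensor_algebra t)
  (hG : forall g1 g2 g3 : G, lcomm g1 [:: g2; g3] = 0)
  (hH : forall h1 h2 h3 : H, lcomm h1 [:: h2; h3] = 0)
  (m' n' : nat) (hm : (1 <= m')%N) (hn : (1 <= n')%N)
  (g g' : nat -> G) (h h' : nat -> H) :
  let v := fun i : nat =>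
    if (i == 1%N) || (i == (2 * m')%N) then t (g i) 1 else t (g i) (h i) in
  let w := fun j : nat => if j == 1%N then t (g' j) 1 else t (g' j) (h' j) in
  lcomm (v 1%N) [seq v i | i <- iota 2 (2 * m' - 1)] =
    t (\prod_(0 <= k < m') comm (g (2 * k + 1)%N) (g (2 * k + 2)%N))
      (\prod_(1 <= k < m') comm (h (2 * k)%N) (h (2 * k + 1)%N))
  /\
  lcomm (w 1%N) [seq w j | j <- iota 2 (2 * n')] =
    t ((\prod_(0 <= k < n') comm (g' (2 * k + 1)%N) (g' (2 * k + 2)%N))
          * g' (2 * n' + 1)%N)
      (\prod_(1 <= k < n'.+1) comm (h' (2 * k)%N) (h' (2 * k + 1)%N)).
Proof.
move=> v w.
case: hT => [[hl hr] hmul _ _].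
have tBl : forall a b c, t (a - b) c = t a c - t b c.
  move=> a b c; have := hl (-1) b a c; rewrite !scaleN1r => E.
  rewrite addrC E; exact: addrC.
have tBr : forall a b c, t a (b - c) = t a b - t a c.
  move=> a b c; have := hr (-1) a c b; rewrite !scaleN1r => E.
  rewrite addrC E; exact: addrC.
have cG : forall x y z : G, comm x y * z = z * comm x y.
  move=> x y z; have := hG x y z; rewrite /lcomm /= => /eqP.
  by rewrite {1}/comm subr_eq0 => /eqP.
have cH : forall x y z : H, comm x y * z = z * comm x y.
  move=> x y z; have := hH x y z; rewrite /lcomm /= => /eqP.
  by rewrite {1}/comm subr_eq0 => /eqP.
split.
- have [k Ek] : exists k, m' = k.+1 by exists m'.-1; lia.
  pose h0 i := if i == (2 * k.+1)%N then 1 else h i.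
  have Em : [seq v i | i <- iota 2 (2 * m' - 1)] =
            [seq t (g i) (h0 i) | i <- iota 2 (2 * k + 1)].
    have -> : (2 * m' - 1 = 2 * k + 1)%N by lia.
    apply/eq_in_map => i; rewrite mem_iota => /andP [Hi _].
    rewrite /v /h0 Ek; have -> : (i == 1%N) = false by apply/eqP; lia.
    by case: (i == _).
  have V1 : v 1%N = t (g 1%N) 1 by rewrite /v.
  rewrite Em V1 (@main_gen _ _ _ _ t tBl tBr hmul cG cH g h0 k).1 Ek.
  have E2 : (2 * k + 2 = 2 * k.+1)%N by lia.
  have -> : h0 (2 * k + 2)%N = 1 by rewrite /h0 E2 eqxx.
  rewrite mulr1; congr (t _ _).
  apply: eq_big_nat => j /andP [_ Hj]; rewrite /h0.
  have -> : (2 * j == 2 * k.+1)%N = false by apply/eqP; lia.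
  by have -> : (2 * j + 1 == 2 * k.+1)%N = false by apply/eqP; lia.
- have [k Ek] : exists k, n' = k.+1 by exists n'.-1; lia.
  have Em : [seq w i | i <- iota 2 (2 * n')] =
            [seq t (g' i) (h' i) | i <- iota 2 (2 * k + 2)].
    have -> : (2 * n' = 2 * k + 2)%N by lia.
    apply/eq_in_map => i; rewrite mem_iota => /andP [Hi _].
    by rewrite /w; have -> : (i == 1%N) = false by apply/eqP; lia.
  have W1 : w 1%N = t (g' 1%N) 1 by rewrite /w.
  rewrite Em W1 (@main_gen _ _ _ _ t tBl tBr hmul cG cH g' h' k).2 Ek.
  by have -> : (2 * k.+1 + 1 = 2 * k + 3)%N by lia.
Qed.
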